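(* Let $\mathcal P=\{p_0,\dots,p_6\}$ be a typical heptagonal $7$-configuration with a cyclic numeration (indices modulo $7$). Then $d(p_i)+d(p_{i+1})=5$ if the edge $[p_i,p_{i+1}]$ is internal, and $d(p_i)+d(p_{i+1})=7$ if it is external.
   Context: A $7$-configuration is a set of $7$ distinct points in $\mathbb{RP}^2$; it is typical if no three of its points are collinear and no six lie on a common conic. It is heptagonal if there is a line $\ell$ disjoint from it such that its points are the vertices of a convex heptagon in $\mathbb{RP}^2\smallsetminus\ell$; a cyclic numeration lists the points as consecutive vertices of this heptagon. For $i\ne j$ let $Q_{i,j}$ be the conic through the five points of $\mathcal P\smallsetminus\{p_i,p_j\}$, and set $d_{i,j}=0$ if $p_i$ lies inside $Q_{i,j}$ and $d_{i,j}=1$ if outside (''inside'' = the component of the complement homeomorphic to a disc). The dominance index is $d(p_i)=\sum_{j\ne i}d_{i,j}$. The edge $[p_i,p_{i+1}]$ is internal if $d_{i,i+1}=d_{i+1,i}=0$ and external if $d_{i,i+1}=d_{i+1,i}=1$. *)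

(* Defs.v *)
From HB Require Import structures.
From mathcomp Require Import all_boot all_order all_algebra.
From mathcomp Require Import boolp reals.
Set Implicit Arguments. Unset Strict Implicit. Unset Printing Implicit Defensive.
Import Order.TTheory GRing.Theory Num.Theory.
Local Open Scope ring_scope.

Section Defs.
Variable R : realType.

(* Points of RP^2 are represented by nonzero row vectors of R^3
   (homogeneous coordinates). *)
Definition hpoint (x : 'rV[R]_3) : Prop := x != 0.

Definition proj_eq (x y : 'rV[R]_3) : Prop := exists c : R, c != 0 /\ x = c *: y.

Definition mx3 (a b c : 'rV[R]_3) : 'M[R]_3 :=
  \matrix_(k < 3, l < 3)
    (if k == 0 :> nat then a 0 l else if k == 1 :> nat then b 0 l else c 0 l).

Definition collinear (a b c : 'rV[R]_3) : Prop := \det (mx3 a b c) = 0.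

Definition lform (l x : 'rV[R]_3) : R := \sum_(k < 3) l 0 k * x 0 k.

Definition qf (M : 'M[R]_3) (x : 'rV[R]_3) : R := (x *m M *m x^T) 0 0.

(* a (possibly degenerate) conic: a nonzero symmetric quadratic form *)
Definition conic_form (M : 'M[R]_3) : Prop := M != 0 /\ M^T = M.

Definition on_conic (M : 'M[R]_3) (x : 'rV[R]_3) : Prop := qf M x = 0.

Definition line_meets (M : 'M[R]_3) (x v : 'rV[R]_3) : Prop :=
  exists s t : R, (s != 0 \/ t != 0) /\ qf M (s *: x + t *: v) = 0.

(* x lies inside the conic M: x is not on M, and every projective line through
   x meets M (this is the disc component of the complement of a nondegenerate
   conic with real points). *)
Definition inside (M : 'M[R]_3) (x : 'rV[R]_3) : Prop :=
  ~ on_conic M x /\ forall v : 'rV[R]_3, hpoint v -> ~ proj_eq v x -> line_meets M x v.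

Definition config7 (p : 'I_7 -> 'rV[R]_3) : Prop :=
  (forall i, hpoint (p i)) /\ (forall i j, i != j -> ~ proj_eq (p i) (p j)).

Definition typical (p : 'I_7 -> 'rV[R]_3) : Prop :=
  (forall i j k, i != j -> j != k -> i != k -> ~ collinear (p i) (p j) (p k)) /\
  (forall S : {set 'I_7}, #|S| = 6 ->
     ~ exists M, conic_form M /\ forall i, i \in S -> on_conic M (p i)).

(* heptagonal with the given numeration being cyclic: there is a line
   l (given by the linear form l) missing all points such that, in the affine
   chart RP^2 \ l (coordinates x / lform l x), p_0, ..., p_6 are the consecutive
   vertices of a convex heptagon, i.e. for each edge [p_i, p_(i+1)] all other
   vertices lie strictly on the same side of the line through that edge.
   In the chart the orientation of the triangle (p_i, p_(i+1), p_j) is the sign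
   of det(p_i,p_(i+1),p_j) / (l p_i * l p_(i+1) * l p_j). *)
Definition heptagonal_cyclic (p : 'I_7 -> 'rV[R]_3) : Prop :=
  exists l : 'rV[R]_3,
    (forall i, lform l (p i) != 0) /\
    forall i j k : 'I_7,
      j != i -> j != ordS i -> k != i -> k != ordS i ->
      0 < (\det (mx3 (p i) (p (ordS i)) (p j)) / lform l (p j)) *
          (\det (mx3 (p i) (p (ordS i)) (p k)) / lform l (p k)).

Definition conicQ (p : 'I_7 -> 'rV[R]_3) (i j : 'I_7) (M : 'M[R]_3) : Prop :=
  conic_form M /\ forall k, k != i -> k != j -> on_conic M (p k).

Definition inside_Q (p : 'I_7 -> 'rV[R]_3) (i j : 'I_7) : Prop :=
  exists M, conicQ p i j M /\ inside M (p i).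

Definition dcoef (p : 'I_7 -> 'rV[R]_3) (i j : 'I_7) : nat :=
  if `[< inside_Q p i j >] then 0%N else 1%N.

Definition dom_index (p : 'I_7 -> 'rV[R]_3) (i : 'I_7) : nat :=
  (\sum_(j < 7 | j != i) dcoef p i j)%N.

Definition internal_edge (p : 'I_7 -> 'rV[R]_3) (i : 'I_7) : Prop :=
  dcoef p i (ordS i) = 0%N /\ dcoef p (ordS i) i = 0%N.

Definition external_edge (p : 'I_7 -> 'rV[R]_3) (i : 'I_7) : Prop :=
  dcoef p i (ordS i) = 1%N /\ dcoef p (ordS i) i = 1%N.

End Defs.

(* Main.v *)
Require Import Defs.
From HB Require Import structures.
From mathcomp Require Import all_boot all_order all_algebra.
From mathcomp Require Import boolp reals ring lra zify.
Set Implicit Arguments. Unset Strict Implicit. Unset Printing Implicit Defensive.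
Import Order.TTheory GRing.Theory Num.Theory.
Definition ol (i j : 'I_7) := enum (~: (j |: [set i; ordS i])).

Lemma inZpS (t : nat) : ordS (inZp t : 'I_7) = inZp t.+1.
Proof. apply: val_inj => /=. lia. Qed.
Lemma inZp7 (t : nat) : (inZp (t + 7) : 'I_7) = inZp t.
Proof. apply: val_inj => /=. lia. Qed.
Lemma inZp_neq (t k : nat) : 0 < k < 7 -> (inZp (t + k) : 'I_7) != inZp t.
Proof. move=> h; apply/eqP => /(congr1 val) /=. lia. Qed.
Lemma ordS_neq (i : 'I_7) : ordS i != i.
Proof. apply/eqP => /(congr1 val) /=. have := ltn_ord i. lia. Qed.
Lemma card5 (i : 'I_7) : #|[pred j : 'I_7 | (j != i) && (j != ordS i)]| = 5.
Proof.
have h := cardsC [set i; ordS i].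
rewrite cards2 eq_sym ordS_neq card_ord /= in h.
have -> : #|[pred j : 'I_7 | (j != i) && (j != ordS i)]| = #|~: [set i; ordS i]|.
  by apply: eq_card => j; rewrite !inE negb_or.
by apply/eqP; rewrite -(eqn_add2l 2) h.
Qed.

Lemma ol_size (i j : 'I_7) : j != i -> j != ordS i -> size (ol i j) = 4.
Proof.
move=> h1 h2.
rewrite /ol -cardE.
have h := cardsC (j |: [set i; ordS i]).
rewrite cardsU1 cards2 !inE negb_or h1 h2 eq_sym ordS_neq card_ord /= in h.
by apply/eqP; rewrite -(eqn_add2l 3) h.
Qed.

Lemma ol_mem (i j k : 'I_7) : (k \in ol i j) = [&& k != j, k != i & k != ordS i].
Proof. by rewrite /ol mem_enum !inE !negb_or. Qed.

Lemma ol_uniq (i j : 'I_7) : uniq (ol i j).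
Proof. exact: enum_uniq. Qed.

Local Open Scope ring_scope.
Notation i0 := (@Ordinal 3 0 isT).
Notation i1 := (@Ordinal 3 1 isT).
Notation i2 := (@Ordinal 3 2 isT).
Lemma sum3 (R : nmodType) (f : 'I_3 -> R) : \sum_(k < 3) f k = f i0 + f i1 + f i2.
Proof. rewrite !big_ord_recr big_ord0 /= add0r.
by congr (f _ + f _ + f _); apply: val_inj. Qed.
Lemma sum2 (R : nmodType) (f : 'I_2 -> R) : \sum_(k < 2) f k = f ord0 + f ord_max.
Proof. rewrite !big_ord_recr big_ord0 /= add0r.
by congr (f _ + f _); apply: val_inj. Qed.
Lemma det3E (R : comRingType) (M : 'M[R]_3) : \det M =
  M i0 i0 * (M i1 i1 * M i2 i2 - M i1 i2 * M i2 i1)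
  - M i0 i1 * (M i1 i0 * M i2 i2 - M i1 i2 * M i2 i0)
  + M i0 i2 * (M i1 i0 * M i2 i1 - M i1 i1 * M i2 i0).
Proof.
pose f (a b : nat) := M (inord a) (inord b).
have Mf : forall x y, M x y = f x y by move=> x y; rewrite /f !inord_val.
rewrite (expand_det_row _ i0) sum3 /cofactor.
rewrite !(expand_det_row _ ord0) !sum2 /cofactor !det_mx11 !mxE !Mf /=.
rewrite !expr0 !expr1 !mul1r !mulN1r; ring.
Qed.


Section S.
Variable R : realType.
Implicit Types (M : 'M[R]_3) (x y v : 'rV[R]_3).

Definition bf M x v := (x *m M *m v^T) 0 0.

Lemma bfE M x v : bf M x v =
  (x 0 i0 * M i0 i0 + x 0 i1 * M i1 i0 + x 0 i2 * M i2 i0) * v 0 i0 +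
  (x 0 i0 * M i0 i1 + x 0 i1 * M i1 i1 + x 0 i2 * M i2 i1) * v 0 i1 +
  (x 0 i0 * M i0 i2 + x 0 i1 * M i1 i2 + x 0 i2 * M i2 i2) * v 0 i2.
Proof. rewrite /bf [X in X = _]mxE sum3. rewrite ![(_ *m _) _ _]mxE !sum3 ![_^T _ _]mxE. done. Qed.

Lemma qfE M x : qf M x = bf M x x.
Proof. by []. Qed.

Lemma mx3E x y z : \det (mx3 x y z) =
  x 0 i0 * (y 0 i1 * z 0 i2 - y 0 i2 * z 0 i1)
  - x 0 i1 * (y 0 i0 * z 0 i2 - y 0 i2 * z 0 i0)
  + x 0 i2 * (y 0 i0 * z 0 i1 - y 0 i1 * z 0 i0).
Proof. by rewrite det3E /mx3 !mxE /=. Qed.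

Lemma lformE l x : lform l x = l 0 i0 * x 0 i0 + l 0 i1 * x 0 i1 + l 0 i2 * x 0 i2.
Proof. by rewrite /lform sum3. Qed.


Definition symm M := M^T = M.

Lemma symE M : symm M -> [/\ M i1 i0 = M i0 i1, M i2 i0 = M i0 i2 & M i2 i1 = M i1 i2].
Proof.
move=> h; split.
- by rewrite -[in LHS]h mxE.
- by rewrite -[in LHS]h mxE.
- by rewrite -[in LHS]h mxE.
Qed.

Definition Nf M x v := bf M x v ^+ 2 - qf M x * qf M v.
Definition N2 M x v w := bf M x v * bf M x w - qf M x * bf M v w.

Ltac coords := rewrite ?/Nf ?/N2 ?/collinear ?qfE ?mx3E ?bfE ?mx3E ?lformE ?mxE.

Lemma qf_comb M x v s t : symm M ->
  qf M (s *: x + t *: v) = s^+2 * qf M x + 2 * s * t * bf M x v + t^+2 * qf M v.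
Proof. move=> /symE [e1 e2 e3]; coords; rewrite ?mxE e1 e2 e3; ring. Qed.

Lemma N_comb M x v w a b : symm M ->
  Nf M x (a *: v + b *: w) = a^+2 * Nf M x v + 2 * a * b * N2 M x v w + b^+2 * Nf M x w.
Proof. move=> /symE [e1 e2 e3]; coords; rewrite ?mxE e1 e2 e3; ring. Qed.

Lemma gram M x v w : symm M ->
  Nf M x v * Nf M x w - N2 M x v w ^+ 2 = qf M x * \det M * (\det (mx3 x v w))^+2.
Proof. move=> /symE [e1 e2 e3]; rewrite det3E; coords; rewrite e1 e2 e3; ring. Qed.


Definition ev (k : 'I_3) : 'rV[R]_3 := \row_(l < 3) (l == k)%:R.

Lemma kern M z : (forall y, bf M z y = 0) -> z != 0 -> \det M = 0.
Proof.
move=> h nz.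
pose h0 := bf M z (ev i0); pose h1 := bf M z (ev i1); pose h2 := bf M z (ev i2).
have E0 : \det M * z 0 i0 = h0 * (M i1 i1 * M i2 i2 - M i1 i2 * M i2 i1)
   - h1 * (M i1 i0 * M i2 i2 - M i1 i2 * M i2 i0) + h2 * (M i1 i0 * M i2 i1 - M i1 i1 * M i2 i0).
  by rewrite /h0 /h1 /h2 det3E !bfE /ev !mxE /=; ring.
have E1 : \det M * z 0 i1 = - h0 * (M i0 i1 * M i2 i2 - M i0 i2 * M i2 i1)
   + h1 * (M i0 i0 * M i2 i2 - M i0 i2 * M i2 i0) - h2 * (M i0 i0 * M i2 i1 - M i0 i1 * M i2 i0).
  by rewrite /h0 /h1 /h2 det3E !bfE /ev !mxE /=; ring.
have E2 : \det M * z 0 i2 = h0 * (M i0 i1 * M i1 i2 - M i0 i2 * M i1 i1)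
   - h1 * (M i0 i0 * M i1 i2 - M i0 i2 * M i1 i0) + h2 * (M i0 i0 * M i1 i1 - M i0 i1 * M i1 i0).
  by rewrite /h0 /h1 /h2 det3E !bfE /ev !mxE /=; ring.
move: E0 E1 E2; rewrite /h0 /h1 /h2 !h !mul0r ?subr0 ?addr0 ?sub0r ?oppr0 ?mulN1r ?mul0r ?addr0 ?oppr0.
move=> E0 E1 E2.
apply: contraNeq nz => dn; apply/eqP/rowP => k; rewrite mxE.
have: \det M * z 0 k = 0.
  case: k => [[|[|[|k]]] hk] //.
  - by rewrite -E0 (_ : Ordinal hk = i0) //; apply: val_inj.
  - by rewrite -E1 (_ : Ordinal hk = i1) //; apply: val_inj.
  - by rewrite -E2 (_ : Ordinal hk = i2) //; apply: val_inj.
by move/eqP; rewrite mulf_eq0 (negbTE dn) => /eqP.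
Qed.

Lemma Nf_prop M x c : symm M -> Nf M x (c *: x) = 0.
Proof. move=> /symE [e1 e2 e3]; coords; rewrite ?mxE e1 e2 e3; ring. Qed.

Lemma qf_prop M x c : qf M (c *: x) = c ^+ 2 * qf M x.
Proof. coords; ring. Qed.

Lemma Nz M x z : symm M -> qf M z = 0 -> Nf M x z = bf M x z ^+ 2.
Proof. by move=> _ h; rewrite /Nf h mulr0 subr0. Qed.

Lemma inside_of_pos M x z : symm M -> z != 0 -> qf M z = 0 ->
  0 < \det M * qf M x -> inside M x.
Proof.
move=> sM nz qz pos.
have qx : qf M x != 0 by apply: contraTneq pos => ->; rewrite mulr0 ltxx.
have Npos : forall v, 0 <= Nf M x v.
  move=> v; rewrite leNgt; apply/negP => Nv.
  have Nle : forall w, Nf M x w <= 0.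
    move=> w; have g := gram x v w sM.
    have h1 : 0 <= qf M x * \det M * (\det (mx3 x v w))^+2.
      by apply: mulr_ge0; [rewrite mulrC ltW | exact: sqr_ge0].
    have h2 : 0 <= Nf M x v * Nf M x w.
      by rewrite -(subr_ge0) in h1 *; nra.
    nra.
  have bz : bf M x z = 0.
    have := Nle z; rewrite Nz // => h; apply/eqP; rewrite -sqrf_eq0 eq_le h sqr_ge0 //.
  have bzy : forall y, bf M z y = 0.
    move=> y; set P := Nf M x y; set Q := qf M x * bf M z y.
    have hP : P <= 0 by apply: Nle.
    set t := (1 - P)^-1.
    have ht0 : 0 < t by rewrite invr_gt0; lra.
    have ht : t * (1 - P) = 1 by rewrite mulVf //; apply: lt0r_neq0; lra.
    have := Nle (1 *: z + (- Q * t) *: y); rewrite N_comb // -/P.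
    rewrite /N2 bz mul0r sub0r Nz // bz expr0n /= mulr0 add0r -/Q.
    have e : t * P = t - 1 by lra.
    rewrite (_ : (- Q * t) ^+ 2 * P = Q^+2 * t * (t * P)); last by ring.
    rewrite e => h.
    have hQ : Q = 0.
      have h4 : Q ^+ 2 * (t * (t + 1)) <= 0.
        by rewrite (_ : Q ^+ 2 * (t * (t + 1)) = 2 * 1 * (- Q * t) * - Q + Q ^+ 2 * t * (t - 1)) //; ring.
      have h3 : 0 <= Q ^+ 2 * (t * (t + 1)) by apply: mulr_ge0; [exact: sqr_ge0 | nra].
      have : Q ^+ 2 * (t * (t + 1)) = 0 by lra.
      move/eqP; rewrite mulf_eq0 sqrf_eq0 => /orP [/eqP //|].
      by rewrite mulf_eq0 => /orP [] /eqP; lra.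
    by move: hQ => /eqP; rewrite mulf_eq0 (negbTE qx) => /eqP.
  have := kern bzy nz => d0; move: pos; rewrite d0 mul0r ltxx //.
split; first by apply/eqP.
move=> v _ _.
exists ((Num.sqrt (Nf M x v) - bf M x v) / qf M x), 1; split; first by right; exact: oner_neq0.
rewrite qf_comb //.
set r := Num.sqrt _; set b := bf M x v.
have hr : r ^+ 2 = b ^+ 2 - qf M x * qf M v by rewrite sqr_sqrtr // Npos.
rewrite (_ : _ + _ = (r ^+ 2 - b ^+ 2 + qf M x * qf M v) / qf M x).
  by rewrite hr; rewrite (_ : b ^+ 2 - qf M x * qf M v - b ^+ 2 + qf M x * qf M v = 0) ?mul0r //; ring.
by field.
Qed.


Lemma quad_neg (g11 g12 g22 : R) : g11 * g22 - g12 ^+ 2 < 0 ->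
  exists a b, a ^+ 2 * g11 + 2 * a * b * g12 + b ^+ 2 * g22 < 0.
Proof.
move=> h.
have [h11|h11|h11] := ltrgtP g11 0.
- by exists 1, 0; rewrite expr0n /= !mulr0 !mul0r !addr0 expr1n mul1r.
- exists (- g12), g11.
  rewrite (_ : _ + _ = g11 * (g11 * g22 - g12 ^+ 2)); last by ring.
  by rewrite pmulr_rlt0.
- exists (- (g22 + 1)), (2 * g12).
  rewrite h11 in h *; rewrite (_ : _ + _ = - 4 * g12 ^+ 2); last by ring.
  have : 0 < g12 ^+ 2 by lra.
  lra.
Qed.

Lemma rv3_neq0 (x : 'rV[R]_3) : x != 0 -> [\/ x 0 i0 != 0, x 0 i1 != 0 | x 0 i2 != 0].
Proof.
move=> nz; apply/or3P; apply: contraNT nz; rewrite !negb_or !negbK => /and3P [/eqP a /eqP b /eqP c].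
apply/eqP/rowP => k; rewrite mxE; case: k => [[|[|[|k]]] hk] //.
- by rewrite -a (_ : Ordinal hk = i0) //; apply: val_inj.
- by rewrite -b (_ : Ordinal hk = i1) //; apply: val_inj.
- by rewrite -c (_ : Ordinal hk = i2) //; apply: val_inj.
Qed.

Lemma exN M x : symm M -> qf M x * \det M < 0 -> exists v, Nf M x v < 0.
Proof.
move=> sM h.
have nx : x != 0.
  apply: contraTneq h => ->.
  rewrite qfE bfE !mxE /=; apply/negP; nra.
have key : forall v w, \det (mx3 x v w) != 0 -> exists u, Nf M x u < 0.
  move=> v w dn.
  have g := gram x v w sM.
  have : Nf M x v * Nf M x w - N2 M x v w ^+ 2 < 0.
    by rewrite g pmulr_llt0 // exprn_even_gt0.
  case/quad_neg => a [b hab].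
  by exists (a *: v + b *: w); rewrite N_comb //; rewrite mulrC [Nf M x w * _]mulrC.
case/rv3_neq0: nx => hc.
- apply: (key (ev i1) (ev i2)); rewrite mx3E /ev !mxE /=.
  by apply: contra hc => /eqP e; apply/eqP; rewrite -e; ring.
- apply: (key (ev i0) (ev i2)); rewrite mx3E /ev !mxE /=.
  by apply: contra hc => /eqP e; apply/eqP; apply: (@oppr_inj _ _ 0); rewrite oppr0 -e; ring.
- apply: (key (ev i0) (ev i1)); rewrite mx3E /ev !mxE /=.
  by apply: contra hc => /eqP e; apply/eqP; rewrite -e; ring.
Qed.


Lemma not_inside_of_neg M x : symm M -> \det M * qf M x < 0 -> ~ inside M x.
Proof.
move=> sM h [_ H].
have [v Nv] : exists v, Nf M x v < 0 by apply: exN => //; rewrite mulrC.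
have hv : hpoint v.
  rewrite /hpoint; apply/eqP => v0.
  subst v; move: Nv; rewrite -(scale0r x) Nf_prop // ltxx //.
have npe : ~ proj_eq v x.
  by case=> c [_ e]; move: Nv; rewrite e Nf_prop // ltxx.
case: (H v hv npe) => s [t [st0]].
rewrite qf_comb // => e.
set q := qf M x in e Nv *; set b := bf M x v in e Nv *; set c := qf M v in e Nv *.
have E : (s * q + t * b) ^+ 2 - t ^+ 2 * Nf M x v = q * (s ^+ 2 * q + 2 * s * t * b + t ^+ 2 * c).
  by rewrite /Nf -/q -/b -/c; ring.
rewrite e mulr0 in E.
have t0 : t = 0.
  have : 0 <= (s * q + t * b) ^+ 2 by exact: sqr_ge0.
  have : 0 <= t ^+ 2 by exact: sqr_ge0.
  move=> h1 h2; apply/eqP; rewrite -sqrf_eq0; apply/eqP; nra.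
move: E; rewrite t0 !mul0r addr0 expr0n /= mul0r subr0 => /eqP.
rewrite sqrf_eq0 mulf_eq0 => /orP [/eqP s0|/eqP q0].
- by case: st0 => /eqP.
- by move: h; rewrite -/q q0 mulr0 ltxx.
Qed.

Lemma inside_iff M x z : symm M -> z != 0 -> qf M z = 0 -> \det M != 0 -> qf M x != 0 ->
  inside M x <-> 0 < \det M * qf M x.
Proof.
move=> sM nz qz dn qn; split; last by move=> h; exact: (inside_of_pos sM nz qz h).
move=> ins; rewrite lt_neqAle eq_sym mulf_eq0 negb_or dn qn /=.
rewrite leNgt; apply/negP => neg; exact: (not_inside_of_neg sM neg ins).
Qed.


Definition crs (a b : 'rV[R]_3) : 'rV[R]_3 :=
  \row_(k < 3) (if k == i0 then a 0 i1 * b 0 i2 - a 0 i2 * b 0 i1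
                else if k == i1 then a 0 i2 * b 0 i0 - a 0 i0 * b 0 i2
                else a 0 i0 * b 0 i1 - a 0 i1 * b 0 i0).

Lemma crsE a b : [/\ crs a b 0 i0 = a 0 i1 * b 0 i2 - a 0 i2 * b 0 i1,
  crs a b 0 i1 = a 0 i2 * b 0 i0 - a 0 i0 * b 0 i2 &
  crs a b 0 i2 = a 0 i0 * b 0 i1 - a 0 i1 * b 0 i0].
Proof. by rewrite /crs !mxE. Qed.

Lemma crs0 a b : crs a b 0 i0 = a 0 i1 * b 0 i2 - a 0 i2 * b 0 i1.
Proof. by case: (crsE a b). Qed.
Lemma crs1 a b : crs a b 0 i1 = a 0 i2 * b 0 i0 - a 0 i0 * b 0 i2.
Proof. by case: (crsE a b). Qed.
Lemma crs2 a b : crs a b 0 i2 = a 0 i0 * b 0 i1 - a 0 i1 * b 0 i0.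
Proof. by case: (crsE a b). Qed.

Definition symP (u v : 'rV[R]_3) : 'M[R]_3 := \matrix_(k, l) (u 0 k * v 0 l + v 0 k * u 0 l).

Lemma symP_sym u v : symm (symP u v).
Proof. by apply/matrixP => k l; rewrite !mxE addrC [u 0 l * _]mulrC [v 0 l * _]mulrC. Qed.

Lemma qf_symP u v y : qf (symP u v) y = 2 * lform u y * lform v y.
Proof. coords; ring. Qed.

Definition br (a b c : 'rV[R]_3) := \det (mx3 a b c).

Lemma lform_crs a b y : lform (crs a b) y = br a b y.
Proof. by case: (crsE a b) => e0 e1 e2; rewrite /br lformE e0 e1 e2 mx3E; ring. Qed.

Lemma det_pencil u v w z a b :
  \det (a *: symP u v + b *: symP w z) =
  - 2 * a * b * (a * (br u v w * br u v z) + b * (br w z u * br w z v)).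
Proof. rewrite det3E /br !mx3E !mxE; ring. Qed.


Section Pencil.
Variables q0 q1 q2 q3 : 'rV[R]_3.

Definition D012 := br q0 q1 q2.
Definition D013 := br q0 q1 q3.
Definition D023 := br q0 q2 q3.
Definition D123 := br q1 q2 q3.

Ltac crsall := rewrite ?crs0 ?crs1 ?crs2.

Lemma br_uvw : br (crs q0 q1) (crs q2 q3) (crs q0 q2) = - (D012 * D023).
Proof. rewrite /D012 /D023 /br !mx3E; crsall; ring. Qed.
Lemma br_uvz : br (crs q0 q1) (crs q2 q3) (crs q1 q3) = - (D013 * D123).
Proof. rewrite /D013 /D123 /br !mx3E; crsall; ring. Qed.
Lemma br_wzu : br (crs q0 q2) (crs q1 q3) (crs q0 q1) = D012 * D013.
Proof. rewrite /D012 /D013 /br !mx3E; crsall; ring. Qed.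
Lemma br_wzv : br (crs q0 q2) (crs q1 q3) (crs q2 q3) = D023 * D123.
Proof. rewrite /D023 /D123 /br !mx3E; crsall; ring. Qed.

Definition GG := symP (crs q0 q1) (crs q2 q3).
Definition HH := symP (crs q0 q2) (crs q1 q3).
Definition gv Y := br q0 q1 Y * br q2 q3 Y.
Definition hv Y := br q0 q2 Y * br q1 q3 Y.
Definition conY Y := hv Y *: GG + (- gv Y) *: HH.
Definition Phi Y := gv Y * hv Y * (br q0 q3 Y * br q1 q2 Y).
Definition PP := D012 * D013 * D023 * D123.

Lemma hv_gv Y : hv Y - gv Y = br q0 q3 Y * br q1 q2 Y.
Proof. rewrite /hv /gv /br !mx3E; ring. Qed.

Lemma det_conY Y : \det (conY Y) = 2 * PP * Phi Y.
Proof.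
rewrite /conY /GG /HH det_pencil br_uvw br_uvz br_wzu br_wzv /Phi -hv_gv /PP; ring.
Qed.

Lemma conY_sym Y : symm (conY Y).
Proof.
have := symP_sym (crs q0 q1) (crs q2 q3); have := symP_sym (crs q0 q2) (crs q1 q3).
rewrite /symm /conY /GG /HH => h1 h2.
by rewrite linearD !linearZ /= h1 h2.
Qed.

Lemma qf_conY Y x : qf (conY Y) x = 2 * (hv Y * gv x - gv Y * hv x).
Proof.
have e : forall M1 M2 (a b : R), qf (a *: M1 + b *: M2) x = a * qf M1 x + b * qf M2 x.
  by move=> M1 M2 a b; coords; ring.
rewrite /conY e /GG /HH !qf_symP !lform_crs /gv /hv; ring.
Qed.


Lemma br_rep a b : [/\ br a b a = 0, br a b b = 0 & br a a b = 0].
Proof. by rewrite /br !mx3E; split; ring. Qed.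

Lemma qf_conY_self Y : qf (conY Y) Y = 0.
Proof. rewrite qf_conY; ring. Qed.

Lemma qf_conY_q Y : [/\ qf (conY Y) q0 = 0, qf (conY Y) q1 = 0,
   qf (conY Y) q2 = 0 & qf (conY Y) q3 = 0].
Proof.
rewrite !qf_conY /gv /hv.
have [r1 r2 r3] := br_rep q0 q1; have [r4 r5 r6] := br_rep q2 q3.
have [r7 r8 r9] := br_rep q0 q2; have [r10 r11 r12] := br_rep q1 q3.
by rewrite r1 r2 r4 r5 r7 r8 r10 r11; split; ring.
Qed.

Lemma qf_conY_swap A B : qf (conY A) B = - qf (conY B) A.
Proof. rewrite !qf_conY; ring. Qed.

Lemma keyg A B : PP != 0 -> 0 < Phi A * Phi B -> qf (conY B) A != 0 ->
  (0 < \det (conY B) * qf (conY B) A) <-> ~ (0 < \det (conY A) * qf (conY A) B).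
Proof.
move=> hP hPhi hk.
rewrite [qf (conY A) B]qf_conY_swap.
set k := qf (conY B) A in hk *.
have hd : 0 < \det (conY B) * \det (conY A).
  rewrite !det_conY (_ : _ * _ = 4 * PP ^+ 2 * (Phi A * Phi B)); last by ring.
  by apply: mulr_gt0 => //; apply: mulr_gt0 => //; rewrite exprn_even_gt0.
have hk2 : 0 < k ^+ 2 by rewrite exprn_even_gt0.
set d1 := \det (conY B) in hd *; set d2 := \det (conY A) in hd *.
have hprod : (d1 * k) * (d2 * - k) < 0.
  rewrite (_ : _ * _ = - ((d1 * d2) * k ^+ 2)); last by ring.
  by rewrite oppr_lt0; apply: mulr_gt0.
split.
- move=> h1 h2; have := mulr_gt0 h1 h2.
  by rewrite ltNge (ltW hprod).
- move=> h; rewrite ltNge; apply/negP => h1.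
  apply: h; move: hprod; rewrite le_eqVlt in h1; case/orP: h1 => [/eqP ->|h1].
    by rewrite mul0r ltxx.
  by rewrite nmulr_rlt0.
Qed.



Lemma Phi_pos A B (lam : R) :
  0 < lam * (br q0 q1 A * br q0 q1 B) -> 0 < lam * (br q2 q3 A * br q2 q3 B) ->
  0 < lam * (br q0 q2 A * br q0 q2 B) -> 0 < lam * (br q1 q3 A * br q1 q3 B) ->
  0 < lam * (br q0 q3 A * br q0 q3 B) -> 0 < lam * (br q1 q2 A * br q1 q2 B) ->
  0 < Phi A * Phi B.
Proof.
move=> h1 h2 h3 h4 h5 h6.
have hl : lam != 0 by apply: contraTneq h1 => ->; rewrite mul0r ltxx.
have : 0 < lam ^+ 6 * (Phi A * Phi B).
  rewrite (_ : _ * _ = (lam * (br q0 q1 A * br q0 q1 B)) * (lam * (br q2 q3 A * br q2 q3 B)) *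
   (lam * (br q0 q2 A * br q0 q2 B)) * (lam * (br q1 q3 A * br q1 q3 B)) *
   (lam * (br q0 q3 A * br q0 q3 B)) * (lam * (br q1 q2 A * br q1 q2 B))); last by rewrite /Phi /gv /hv; ring.
  by do 5! apply: mulr_gt0 => //.
by rewrite pmulr_rgt0 // exprn_even_gt0.
Qed.

End Pencil.


Lemma sign_trans (s a b : R) : 0 < s * a -> 0 < a * b -> 0 < s * b.
Proof.
move=> h1 h2; have : 0 < (s * a) * (a * b) by apply: mulr_gt0.
rewrite (_ : _ * _ = a ^+ 2 * (s * b)); last by ring.
have ha : a != 0 by apply: contraTneq h2 => ->; rewrite mul0r ltxx.
by rewrite pmulr_rgt0 // exprn_even_gt0.
Qed.

Lemma sign_prod (s a b : R) : 0 < s * a -> 0 < s * b -> 0 < a * b.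
Proof.
move=> h1 h2; have : 0 < (s * a) * (s * b) by apply: mulr_gt0.
rewrite (_ : _ * _ = s ^+ 2 * (a * b)); last by ring.
have ha : s != 0 by apply: contraTneq h2 => ->; rewrite mul0r ltxx.
by rewrite pmulr_rgt0 // exprn_even_gt0.
Qed.

Lemma br_cyc a b c : br a b c = br b c a.
Proof. rewrite /br !mx3E; ring. Qed.
Lemma br_swap a b c : br a b c = - br b a c.
Proof. rewrite /br !mx3E; ring. Qed.
Lemma br_plk x a b c d :
  br x a b * br x c d - br x a c * br x b d + br x a d * br x b c = 0.
Proof. rewrite /br !mx3E; ring. Qed.

Section Convex.
Variable p : 'I_7 -> 'rV[R]_3.
Variable l : 'rV[R]_3.
Hypothesis hl : forall i, lform l (p i) != 0.
Hypothesis hedge : forall i j k : 'I_7, j != i -> j != ordS i -> k != i -> k != ordS i ->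
      0 < (\det (mx3 (p i) (p (ordS i)) (p j)) / lform l (p j)) *
          (\det (mx3 (p i) (p (ordS i)) (p k)) / lform l (p k)).

Definition lf i := lform l (p i).
Definition nb (a b c : 'I_7) := br (p a) (p b) (p c) / (lf a * lf b * lf c).

Lemma nb_cyc a b c : nb a b c = nb b c a.
Proof. by rewrite /nb br_cyc; congr (_ / _); ring. Qed.
Lemma nb_swap a b c : nb a b c = - nb b a c.
Proof. rewrite /nb br_swap; rewrite mulNr; congr (- (_ / _)); ring. Qed.
Lemma nb_swap2 a b c : nb a b c = - nb a c b.
Proof. by rewrite nb_swap nb_cyc. Qed.

Lemma edge i j k : j != i -> j != ordS i -> k != i -> k != ordS i ->
  0 < nb i (ordS i) j * nb i (ordS i) k.
Proof.
move=> h1 h2 h3 h4; have := hedge h1 h2 h3 h4.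
have := hl i; have := hl (ordS i); have := hl j; have := hl k.
rewrite /nb /lf /br => n1 n2 n3 n4 h.
rewrite (_ : _ * _ = (\det (mx3 (p i) (p (ordS i)) (p j)) / lform l (p j) *
   (\det (mx3 (p i) (p (ordS i)) (p k)) / lform l (p k))) / (lform l (p i) * lform l (p (ordS i))) ^+ 2).
  by apply: divr_gt0 => //; rewrite exprn_even_gt0 // mulf_neq0.
by field; rewrite ?hl.
Qed.

Lemma plk (o a b c d : 'I_7) :
  nb o a b * nb o c d - nb o a c * nb o b d + nb o a d * nb o b c = 0.
Proof.
have := hl o; have := hl a; have := hl b; have := hl c; have := hl d.
rewrite /nb /lf => n1 n2 n3 n4 n5.
rewrite (_ : _ + _ = (br (p o) (p a) (p b) * br (p o) (p c) (p d) - br (p o) (p a) (p c) * br (p o) (p b) (p d)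
   + br (p o) (p a) (p d) * br (p o) (p b) (p c)) / (lform l (p o) ^+ 2 * lform l (p a) * lform l (p b) * lform l (p c) * lform l (p d))).
  by rewrite br_plk mul0r.
by field; rewrite ?hl.
Qed.

Notation P t := (inZp t : 'I_7).

Lemma Pmod (m n : nat) : (m %% 7 = n %% 7)%N -> P m = P n.
Proof. by move=> h; apply: val_inj. Qed.
Lemma Peq (m n : nat) : (P m == P n) = (m %% 7 == n %% 7)%N.
Proof. by []. Qed.
Lemma PS (t : nat) : ordS (P t) = P (t + 1).
Proof. by apply: val_inj => /=; lia. Qed.

Ltac pneq := rewrite Peq; apply/eqP; lia.
Ltac pmod := apply: Pmod; lia.

Definition sg := nb (P 0) (P 1) (P 2).

Lemma Epos (t k : nat) : (2 <= k <= 6)%N -> 0 < sg * nb (P t) (P (t + 1)) (P (t + k)).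
Proof.
elim: t k => [|t IH] k hk.
  rewrite /sg (_ : P (0 + 1) = ordS (P 0)); last by rewrite PS.
  by apply: edge; rewrite ?PS; pneq.
have h0 := IH 2 isT.
have e1 : nb (P t) (P (t + 1)) (P (t + 2)) = nb (P (t.+1)) (ordS (P t.+1)) (P t).
  by rewrite nb_cyc PS; congr nb; pmod.
rewrite e1 in h0.
apply: (sign_trans h0).
rewrite (_ : P (t.+1 + 1) = ordS (P t.+1)); last by rewrite PS.
by apply: edge; rewrite ?PS; pneq.
Qed.

Lemma Tm6 (t k : nat) : (1 <= k <= 5)%N -> 0 < sg * nb (P t) (P (t + k)) (P (t + 6)).
Proof.
move=> hk; rewrite -nb_cyc.
rewrite (_ : P t = P (t + 6 + 1)); last by pmod.
rewrite (_ : P (t + k) = P (t + 6 + k.+1)); last by pmod.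
by apply: Epos; lia.
Qed.

Lemma Tadj (t k : nat) : (1 <= k <= 5)%N -> 0 < sg * nb (P t) (P (t + k)) (P (t + k.+1)).
Proof.
move=> hk; rewrite nb_cyc.
rewrite (_ : P (t + k.+1) = P (t + k + 1)); last by pmod.
rewrite (_ : P t = P (t + k + (7 - k))); last by pmod.
by apply: Epos; lia.
Qed.

Lemma T24 (t : nat) : 0 < sg * nb (P t) (P (t + 2)) (P (t + 4)).
Proof.
have hp := plk (P t) (P (t + 2)) (P (t + 4)) (P (t + 3)) (P (t + 6)).
rewrite [nb _ (P (t + 4)) (P (t + 3))]nb_swap2 mulrN in hp.
have h36 : 0 < sg * nb (P t) (P (t + 3)) (P (t + 6)) := @Tm6 t 3 isT.
have h23 : 0 < sg * nb (P t) (P (t + 2)) (P (t + 3)) := @Tadj t 2 isT.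
have h46 : 0 < sg * nb (P t) (P (t + 4)) (P (t + 6)) := @Tm6 t 4 isT.
have h26 : 0 < sg * nb (P t) (P (t + 2)) (P (t + 6)) := @Tm6 t 2 isT.
have h34 : 0 < sg * nb (P t) (P (t + 3)) (P (t + 4)) := @Tadj t 3 isT.
move: hp h36 h23 h46 h26 h34.
set A := nb _ (P (t + 2)) (P (t + 4)).
set B := nb _ (P (t + 3)) (P (t + 6)).
set C := nb _ (P (t + 2)) (P (t + 3)).
set D := nb _ (P (t + 4)) (P (t + 6)).
set E := nb _ (P (t + 2)) (P (t + 6)).
set F := nb _ (P (t + 3)) (P (t + 4)).
move=> hp h36 h23 h46 h26 h34.
have e : A * B = C * D + E * F by lra.
have : 0 < (sg * A) * (sg * B).
  rewrite (_ : _ * _ = (sg * C) * (sg * D) + (sg * E) * (sg * F)).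
    by apply: addr_gt0; apply: mulr_gt0.
  rewrite (_ : (sg * A) * (sg * B) = sg ^+ 2 * (A * B)); last by ring.
  by rewrite e; ring.
by rewrite pmulr_lgt0.
Qed.



Lemma Tpos (t k m : nat) : (1 <= k)%N -> (k < m)%N -> (m <= 6)%N ->
  0 < sg * nb (P t) (P (t + k)) (P (t + m)).
Proof.
move=> h1 h2 h3.
have [->|k1] := eqVneq k 1%N; first by apply: Epos; lia.
have [->|m6] := eqVneq m 6%N; first by apply: Tm6; lia.
have [->|mk] := eqVneq m k.+1; first by apply: Tadj; lia.
have [->|k3] : (k = 2 \/ k = 3)%N by lia.
  have [->|->] : (m = 4 \/ m = 5)%N by lia.
    exact: T24.
  rewrite -nb_cyc.
  rewrite (_ : P t = P (t + 5 + 2)); last by pmod.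
  rewrite (_ : P (t + 2) = P (t + 5 + 4)); last by pmod.
  exact: T24.
have -> : m = 5%N by lia.
rewrite k3 nb_cyc.
rewrite (_ : P t = P (t + 3 + 4)); last by pmod.
rewrite (_ : P (t + 5) = P (t + 3 + 2)); last by pmod.
exact: T24.
Qed.

Lemma nb_cyc2 a b c : nb a b c = nb c a b.
Proof. by rewrite [RHS]nb_cyc. Qed.

Lemma offsets (i a : 'I_7) : a != i -> a != ordS i ->
  exists ka, (2 <= ka <= 6)%N /\ a = P (val i + ka).
Proof.
move=> h1 h2; exists ((a + 7 - i) %% 7)%N.
have hi := ltn_ord i; have ha := ltn_ord a.
move: h1 h2; rewrite -!(inj_eq val_inj) /= => h1 h2.
split; first lia.
by apply: val_inj => /=; lia.
Qed.

Lemma conv (i a b : 'I_7) : a != i -> a != ordS i -> b != i -> b != ordS i -> a != b ->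
  0 < nb a b i * nb a b (ordS i).
Proof.
move=> ha1 ha2 hb1 hb2 hab.
have [ka [hka ea]] := offsets ha1 ha2.
have [kb [hkb eb]] := offsets hb1 hb2.
have kab : ka != kb by apply: contraNneq hab => e; rewrite ea eb e.
have ei : i = P (val i) by apply: val_inj => /=; have := ltn_ord i; lia.
have eS : ordS i = P (val i + 1) by apply: val_inj => /=; lia.
move: (val i) ei eS ea eb => t ei eS ea eb.
rewrite nb_cyc2 [nb a b (ordS i)]nb_cyc2 eS ei ea eb.
rewrite {2}(_ : P (t + ka) = P (t + 1 + (ka - 1))); last by pmod.
rewrite {2}(_ : P (t + kb) = P (t + 1 + (kb - 1))); last by pmod.
have [lt|gt] : (ka < kb \/ kb < ka)%N by move: kab; rewrite neq_ltn => /orP.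
  by apply: (@sign_prod sg); apply: Tpos; lia.
rewrite nb_swap2 [nb (P (t + 1)) _ _]nb_swap2 mulrNN.
by apply: (@sign_prod sg); apply: Tpos; lia.
Qed.

Lemma conv_br (i a b : 'I_7) : a != i -> a != ordS i -> b != i -> b != ordS i -> a != b ->
  0 < (lf i * lf (ordS i)) * (br (p a) (p b) (p i) * br (p a) (p b) (p (ordS i))).
Proof.
move=> ha1 ha2 hb1 hb2 hab; have h := conv ha1 ha2 hb1 hb2 hab.
rewrite (_ : (lf i * lf (ordS i)) * (br (p a) (p b) (p i) * br (p a) (p b) (p (ordS i))) = (nb a b i * nb a b (ordS i)) * ((lf a * lf b) ^+ 2 * (lf i * lf (ordS i)) ^+ 2)).
  apply: mulr_gt0; first exact: h.
  by apply: mulr_gt0; rewrite exprn_even_gt0 //= mulf_neq0 /lf ?hl.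
by rewrite /nb /lf; field; rewrite ?hl.
Qed.

End Convex.

Lemma qfZ c M y : qf (c *: M) y = c * qf M y.
Proof. coords; ring. Qed.

Lemma qf_lin2 M1 M2 (a b : R) y : qf (a *: M1 + b *: M2) y = a * qf M1 y + b * qf M2 y.
Proof. coords; ring. Qed.

Lemma inside_scale M y c : c != 0 -> inside (c *: M) y -> inside M y.
Proof.
move=> hc [h1 h2]; split.
  by move=> h; apply: h1; rewrite /on_conic qfZ h mulr0.
move=> v hv hp; case: (h2 v hv hp) => s [t [st e]]; exists s, t; split => //.
by move: e; rewrite qfZ => /eqP; rewrite mulf_eq0 (negbTE hc) /= => /eqP.
Qed.

Lemma typ6 (p : 'I_7 -> 'rV[R]_3) (j : 'I_7) M : typical p -> symm M -> M != 0 ->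
  (forall k, k != j -> qf M (p k) = 0) -> False.
Proof.
move=> [_ ht] sM nM h; apply: (ht [set~ j]).
  by rewrite cardsC1 card_ord.
exists M; split; first by split.
by move=> k; rewrite in_setC1 => hk; apply: h.
Qed.

Lemma char_inside (p : 'I_7 -> 'rV[R]_3) (x j : 'I_7) M : typical p -> x != j -> symm M -> M != 0 ->
  (forall k, k != x -> k != j -> qf M (p k) = 0) -> qf M (p x) != 0 ->
  inside_Q p x j <-> inside M (p x).
Proof.
move=> ht hxj sM nM hM hx; split; last first.
  by move=> hin; exists M; split => //; split => //; split.
case=> M' [[[nM' sM'] hM'] hin].
have qx' : qf M' (p x) != 0 by apply/eqP; case: hin.
pose N := qf M (p x) *: M' + (- qf M' (p x)) *: M.
have N0 : N = 0.
  apply/eqP; apply: contraT => nN; exfalso.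
  apply: (@typ6 p j N ht).
  - rewrite /symm /N linearD !linearZ /=; rewrite -/(symm M') -/(symm M).
    by move: sM'; rewrite /symm => ->; rewrite sM.
  - exact: nN.
  - move=> k hk; rewrite /N qf_lin2.
    have [->|hkx] := eqVneq k x; first by ring.
    have e1 : qf M' (p k) = 0 := hM' k hkx hk.
    have e2 : qf M (p k) = 0 := hM k hkx hk.
    by rewrite e1 e2 !mulr0 addr0.
have eM : M' = (qf M' (p x) / qf M (p x)) *: M.
  apply/matrixP => a b; move/matrixP: N0 => /(_ a b); rewrite !mxE => e.
  apply: (mulfI hx); rewrite mulrA mulrCA mulfV // mulr1.
  by apply/eqP; rewrite -subr_eq0; apply/eqP; rewrite -e; ring.
apply: (@inside_scale M (p x) (qf M' (p x) / qf M (p x))).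
  by rewrite mulf_neq0 // invr_eq0.
by rewrite -eM.
Qed.

Lemma br_neq0 (p : 'I_7 -> 'rV[R]_3) (a b c : 'I_7) : typical p ->
  a != b -> b != c -> a != c -> br (p a) (p b) (p c) != 0.
Proof. by move=> [ht _] h1 h2 h3; apply/eqP; apply: (ht a b c). Qed.

Lemma key_core (p : 'I_7 -> 'rV[R]_3) (l : 'rV[R]_3) (i j a0 a1 a2 a3 : 'I_7) :
  config7 p -> typical p ->
  (forall i, lform l (p i) != 0) ->
  (forall i j k : 'I_7, j != i -> j != ordS i -> k != i -> k != ordS i ->
      0 < (\det (mx3 (p i) (p (ordS i)) (p j)) / lform l (p j)) *
          (\det (mx3 (p i) (p (ordS i)) (p k)) / lform l (p k))) ->
  j != i -> j != ordS i ->
  [&& a0 != j, a0 != i & a0 != ordS i] ->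
  [&& a1 != j, a1 != i & a1 != ordS i] ->
  [&& a2 != j, a2 != i & a2 != ordS i] ->
  [&& a3 != j, a3 != i & a3 != ordS i] ->
  a0 != a1 -> a0 != a2 -> a0 != a3 -> a1 != a2 -> a1 != a3 -> a2 != a3 ->
  (forall k, k != j -> k != i -> k != ordS i -> [\/ k = a0, k = a1, k = a2 | k = a3]) ->
  (dcoef p i j + dcoef p (ordS i) j = 1)%N.
Proof.
move=> [hpt _] ht hl hedge hji hjS.
move=> /and3P [h0j h0i h0S] /and3P [h1j h1i h1S] /and3P [h2j h2i h2S] /and3P [h3j h3i h3S].
move=> d01 d02 d03 d12 d13 d23 cover.
set q0 := p a0; set q1 := p a1; set q2 := p a2; set q3 := p a3.
set A := p i; set B := p (ordS i).
have hP : PP q0 q1 q2 q3 != 0.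
  rewrite /PP /D012 /D013 /D023 /D123 !mulf_neq0 //; apply: br_neq0 => //.
have cb := fun a b => @conv_br p l hl hedge i a b.
have hPhi : 0 < Phi q0 q1 q2 q3 A * Phi q0 q1 q2 q3 B.
  apply: (@Phi_pos _ _ _ _ _ _ (lf p l i * lf p l (ordS i))); apply: cb => //.
have hPA : Phi q0 q1 q2 q3 A != 0 by apply: contraTneq hPhi => ->; rewrite mul0r ltxx.
have hPB : Phi q0 q1 q2 q3 B != 0 by apply: contraTneq hPhi => ->; rewrite mulr0 ltxx.
set M1 := conY q0 q1 q2 q3 B; set M2 := conY q0 q1 q2 q3 A.
have s1 : symm M1 by apply: conY_sym.
have s2 : symm M2 by apply: conY_sym.
have two0 : (2 : R) != 0 by rewrite pnatr_eq0.
have dM1 : \det M1 != 0 by rewrite det_conY; apply: mulf_neq0 => //; apply: mulf_neq0.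
have dM2 : \det M2 != 0 by rewrite det_conY; apply: mulf_neq0 => //; apply: mulf_neq0.
have nM1 : M1 != 0 by apply: contraNneq dM1 => ->; rewrite det0.
have nM2 : M2 != 0 by apply: contraNneq dM2 => ->; rewrite det0.
have [z0 z1 z2 z3] := qf_conY_q q0 q1 q2 q3 B.
have [w0 w1 w2 w3] := qf_conY_q q0 q1 q2 q3 A.
have vanish1 : forall k, k != i -> k != j -> qf M1 (p k) = 0.
  move=> k hki hkj; have [->|hkS] := eqVneq k (ordS i); first exact: qf_conY_self.
  by case: (cover k hkj hki hkS) => ->.
have vanish2 : forall k, k != ordS i -> k != j -> qf M2 (p k) = 0.
  move=> k hkS hkj; have [->|hki] := eqVneq k i; first exact: qf_conY_self.
  by case: (cover k hkj hki hkS) => ->.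
have kap : qf M1 A != 0.
  apply/eqP => k0; apply: (@typ6 p j M1 ht s1 nM1) => k hk.
  have [->|hki] := eqVneq k i; first exact: k0.
  exact: (vanish1 k hki hk).
have kap2 : qf M2 B != 0 by rewrite /M2 qf_conY_swap oppr_eq0.
have e1 : inside_Q p i j <-> 0 < \det M1 * qf M1 A.
  rewrite (char_inside ht _ s1 nM1 vanish1 kap); last by rewrite eq_sym.
  exact: (inside_iff s1 (hpt a0) z0 dM1 kap).
have e2 : inside_Q p (ordS i) j <-> 0 < \det M2 * qf M2 B.
  rewrite (char_inside ht _ s2 nM2 vanish2 kap2); last by rewrite eq_sym.
  exact: (inside_iff s2 (hpt a0) w0 dM2 kap2).
have kg := keyg hP hPhi kap.
rewrite /dcoef; case: (asboolP (inside_Q p i j)) => h1; case: (asboolP (inside_Q p (ordS i) j)) => h2 //.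
- exfalso; have := (proj1 e1) h1; move/(proj1 kg); apply; exact: (proj1 e2).
- exfalso; apply: h1; apply/(proj2 e1); apply/(proj2 kg) => h; apply: h2; exact: (proj2 e2).
Qed.

Lemma key (p : 'I_7 -> 'rV[R]_3) (i j : 'I_7) : config7 p -> typical p -> heptagonal_cyclic p ->
  j != i -> j != ordS i -> (dcoef p i j + dcoef p (ordS i) j = 1)%N.
Proof.
move=> hc ht [l [hl hedge]] hji hjS.
have sz := ol_size hji hjS.
pose o (t : nat) := nth i (ol i j) t.
have oprop : forall t, (t < 4)%N -> [&& o t != j, o t != i & o t != ordS i].
  by move=> t ht4; rewrite -ol_mem /o mem_nth // sz.
have odist : forall a b, (a < 4)%N -> (b < 4)%N -> a != b -> o a != o b.
  by move=> a b ha hb hab; rewrite /o nth_uniq ?sz // ol_uniq.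
apply: (@key_core p l i j (o 0%N) (o 1%N) (o 2%N) (o 3%N)) => //;
  try (by apply: oprop); try (by apply: odist).
move=> k h1 h2 h3.
have hk : k \in ol i j by rewrite ol_mem h1 h2 h3.
have := nth_index i hk; have := index_mem k (ol i j); rewrite hk sz.
rewrite -/(o (index k (ol i j))).
case: (index k (ol i j)) => [|[|[|[|n]]]] //= _ <-.
- by constructor 1.
- by constructor 2.
- by constructor 3.
- by constructor 4.
Qed.

End S.

Theorem lemma3p5 (R : realType) (p : 'I_7 -> 'rV[R]_3) :
  config7 p -> typical p -> heptagonal_cyclic p ->
  forall i : 'I_7,
    (internal_edge p i -> (dom_index p i + dom_index p (ordS i) = 5)%N) /\
    (external_edge p i -> (dom_index p i + dom_index p (ordS i) = 7)%N).
Proof.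
move=> hc ht hh i.
have hsum : (dom_index p i + dom_index p (ordS i) =
    dcoef p i (ordS i) + dcoef p (ordS i) i + 5)%N.
  rewrite /dom_index (bigD1 (ordS i)) /=; last by rewrite ordS_neq.
  rewrite [X in (_ + X)%N](bigD1 i) /=; last by rewrite eq_sym ordS_neq.
  rewrite [X in (_ + (_ + X))%N](eq_bigl (fun j => (j != i) && (j != ordS i)) _ (fun j => andbC _ _)).
  rewrite addnACA -big_split /=.
  rewrite (eq_bigr (fun _ => 1%N)); last first.
    by move=> j /andP [h1 h2]; apply: key.
  by rewrite sum1_card card5.
split.
- by case=> h1 h2; rewrite hsum h1 h2.
- by case=> h1 h2; rewrite hsum h1 h2.
Qed.
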